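(* Let $n\ge1$, let $z_1,\dots,z_n$ be indeterminates, and let $m_2\ge1$, $m_1\ge0$ be integers. Then \begin{align*} M(m_2,m_1,n)=\;& m_2!\,m_1!\,(n-m_1-m_2)\sum_{i=0}^{m_2}(-1)^i\,c_i\,e_{m_2-i}\,e_{m_2+m_1+i}\\ &-(m_2-1)!\,(m_1+2)!\sum_{i=0}^{m_2-1}(-1)^i\,\frac{(m_1+2+2i)(m_1+i+1)!}{i!\,(m_1+2)!}\,e_{m_2-1-i}\,e_{m_2+m_1+1+i}, \end{align*} where $c_0=1$ and $c_i=\frac{(m_1+2i)(m_1+i-1)!}{i!\,m_1!}$ for $i\ge1$.
   Context: $e_r$ is the elementary symmetric polynomial of degree $r$ in $z_1,\dots,z_n$, with $e_0=1$ and $e_r=0$ for $r>n$. For $m_2\ge1$, $m_1\ge0$, with $N=m_1+m_2+1$ and the sums running over all $N$-tuples $(b_1,\dots,b_N)$ of pairwise distinct elements of $\{1,\dots,n\}$, \[ M(m_2,m_1,n)=\sum_{b} z_{b_1}^2\cdots z_{b_{m_2}}^2\,z_{b_{m_2+1}}\cdots z_{b_{m_2+m_1}}\;-\;\sum_{b} z_{b_1}^2\cdots z_{b_{m_2-1}}^2\,z_{b_{m_2}}z_{b_{m_2+1}}\cdots z_{b_{m_2+m_1+1}}. \] *)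

(* Defs.v *)
From mathcomp Require Import all_boot all_algebra.
From mathcomp Require Export mpoly.
Set Implicit Arguments. Unset Strict Implicit. Unset Printing Implicit Defensive.
Import GRing.Theory.
Local Open Scope ring_scope.

Definition e (n r : nat) : {mpoly rat[n]} := mesym n rat r.

(* M(m2,m1,n): sums over N-tuples (N = m1+m2+1) of pairwise distinct
   indices in {0,..,n-1} (0-based version of {1,..,n}). *)
Definition Mpoly (m2 m1 n : nat) : {mpoly rat[n]} :=
  \sum_(b : (m1 + m2 + 1).-tuple 'I_n | uniq b)
     \prod_(j < m1 + m2 + 1)
        'X_(tnth b j) ^+ (if (j < m2)%N then 2 else if (j < m2 + m1)%N then 1 else 0)
  - \sum_(b : (m1 + m2 + 1).-tuple 'I_n | uniq b)
     \prod_(j < m1 + m2 + 1)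
        'X_(tnth b j) ^+ (if (j < m2 - 1)%N then 2 else 1).

Definition c (m1 i : nat) : rat :=
  if i == 0%N then 1
  else ((m1 + 2 * i) * (m1 + i - 1)`!)%:R / (i`! * m1`!)%:R.

Definition d (m1 i : nat) : rat :=
  ((m1 + 2 + 2 * i) * (m1 + i + 1)`!)%:R / (i`! * (m1 + 2)`!)%:R.

(* Main.v *)
Require Import Defs.
From mathcomp Require Import all_boot all_algebra.
From mathcomp Require Import mpoly.
From mathcomp Require Import ring lra zify.
Import GRing.Theory Num.Theory.
Local Open Scope ring_scope.
Definition G (a L t : nat) : rat :=
  \sum_(i < t.+1) (-1) ^+ i * ('C(a + i, i) * 'C(L, t - i))%:R.

Lemma G_rec a L t : G a.+1 L t.+1 = G a L t.+1 - G a.+1 L t.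
Proof.
rewrite /G big_ord_recl [in X in _ = X - _]big_ord_recl /= !subn0 !addn0 !bin0.
rewrite -addrA -sumrB; congr (_ + _); apply: eq_bigr => i _.
rewrite /bump /= !add1n subSS !exprS !mulN1r.
have -> : 'C(a.+1 + i.+1, i.+1) = ('C(a + i.+1, i.+1) + 'C(a.+1+i, i))%N.
  by rewrite addSn binS addnS.
rewrite mulnDl natrD; ring.
Qed.

Lemma G0 L t : (1 <= L)%N -> G 0%N L t = 'C(L.-1, t)%:R.
Proof.
case: L => // L _ /=.
elim: t => [|t IH]; first by rewrite /G big_ord1 /= !bin0 mul1r.
have -> : G 0%N L.+1 t.+1 = 'C(L.+1, t.+1)%:R - G 0%N L.+1 t.
  rewrite /G big_ord_recl /= subn0 add0n bin0 mul1n expr0 mul1r.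
  rewrite -sumrN; congr (_ + _); apply: eq_bigr => i _.
  by rewrite /bump /= !add0n !add1n !binn subSS exprS mulN1r mulNr.
by rewrite IH binS natrD addrK.
Qed.

Lemma GE a L t : (a < L)%N -> G a L t = 'C(L - a.+1, t)%:R.
Proof.
elim: a t => [|a IHa] t haL; first by rewrite G0 ?subn1 //; apply: leq_trans haL.
elim: t => [|t IHt]; first by rewrite /G big_ord1 /= !bin0 mul1r.
rewrite G_rec IHt IHa ?(ltn_trans _ haL) //.
have -> : (L - a.+1 = (L - a.+2).+1)%N by lia.
by rewrite binS natrD addrK.
Qed.

Lemma c_S m1 i : c m1 i.+1 = ('C(m1 + i.+1, i.+1) + 'C(m1 + i, i))%:R.
Proof.
rewrite /c /=.
have hD : ((i.+1)`! * m1`!)%:R != 0 :> rat by rewrite pnatr_eq0 muln_eq0 !negb_or -!lt0n !fact_gt0.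
suff -> : ((m1 + 2 * i.+1) * (m1 + i.+1 - 1)`!)%N
   = (('C(m1 + i.+1, i.+1) + 'C(m1 + i, i)) * ((i.+1)`! * m1`!))%N.
  by rewrite natrM mulfK.
have h1 : ('C(m1 + i.+1, i.+1) * ((i.+1)`! * m1`!) = (m1 + i.+1)`!)%N.
  by rewrite -[in RHS](bin_fact (leq_addl m1 i.+1)) addnK.
have h2 : ('C(m1 + i, i) * (i`! * m1`!) = (m1 + i)`!)%N.
  by rewrite -[in RHS](bin_fact (leq_addl m1 i)) addnK.
have h3 : ('C(m1 + i, i) * ((i.+1)`! * m1`!) = i.+1 * (m1 + i)`!)%N.
  by rewrite -h2 factS; ring.
rewrite [RHS]mulnDl h1 h3 addnS factS subn1 /=.
ring.
Qed.

Lemma H_id M1 t :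
  \sum_(i < t.+1) (-1) ^+ i * c M1 i * ('C(2 * t + M1, t - i))%:R = (t == 0%N)%:R.
Proof.
case: t => [|t]; first by rewrite big_ord1 /= /c /= bin0 !mulr1.
rewrite big_ord_recl /= {1}/c /= subn0.
set L := (2 * t.+1 + M1)%N.
have -> : \sum_(i < t.+1) (-1) ^+ bump 0 i * c M1 (bump 0 i) * 'C(L, t.+1 - bump 0 i)%:R
   = (G M1 L t.+1 - 'C(L, t.+1)%:R) - G M1 L t.
  rewrite /G [\sum_(i < t.+2) _]big_ord_recl /= addn0 bin0 subn0 mul1n expr0 mul1r [_%:R + _]addrC addrK.
  rewrite -sumrB; apply: eq_bigr => i _.
  rewrite /bump /= !add1n subSS c_S exprS natrD; ring.
rewrite expr0 !mul1r !GE; try (rewrite /L; lia).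
have -> : (L - M1.+1 = (2 * t).+1)%N by rewrite /L; lia.
have -> : 'C((2 * t).+1, t.+1) = 'C((2 * t).+1, t).
  rewrite -bin_sub; last lia.
  by congr 'C(_, _); lia.
ring.
Qed.

Lemma d_c m1 i : d m1 i = c (m1 + 2) i.
Proof.
rewrite /d /c; case: i => [|i] /=.
  rewrite addn0 muln0 addn0 fact0 mul1n.
  have -> : (m1 + 2)`! = ((m1 + 2) * (m1 + 1)`!)%N by rewrite addn2 factS addn1.
  by rewrite divff // pnatr_eq0 muln_eq0 negb_or -!lt0n fact_gt0 addn2.
by congr ((_ * _`!)%:R / _); lia.
Qed.

Lemma card_pat (T : finType) (cls : T -> nat) N : forall (A : {set T}) (s : seq nat),
  size s = N ->
  #|[set t : N.-tuple T | [&& all (mem A) t, uniq t & map cls t == s]]| =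
  (\prod_(j < N) (#|[set x in A | cls x == nth 0%N s j]| - count_mem (nth 0%N s j) (take j s)))%N.
Proof.
elim: N => [|N IHN] A s hs.
  rewrite big_ord0; case: s hs => // _.
  by rewrite (@eq_card1 _ [tuple]) // => t; rewrite [t]tuple0 inE.
case: s hs => // v s [hs].
rewrite big_ord_recl /= subn0.
rewrite -[LHS]sum1dep_card (partition_big (@thead _ _) [pred x | (x \in A) && (cls x == v)]) /=; last first.
  case/tupleP => x t; rewrite theadE /=.
  by case/and3P => /andP[-> _] _; rewrite eqseq_cons => /andP[].
rewrite -sum_nat_const; apply: eq_big => [y|x /andP[xA /eqP cx]]; first by rewrite inE.
transitivity #|[set t : N.-tuple T | [&& all (mem (A :\ x)) t, uniq t & map cls t == s]]|; last first.
  rewrite (IHN (A :\ x) s hs); apply: eq_bigr => j _.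
  rewrite add0n subnDA; congr (_ - _)%N.
  rewrite (cardsD1 x [set x0 in A | cls x0 == nth 0%N s j]) !inE xA cx /=.
  rewrite [in RHS]eq_sym addKn.
  by apply: eq_card => y; rewrite !inE andbA.
rewrite -[RHS]sum1dep_card.
rewrite (reindex (fun t : N.-tuple T => [tuple of x :: t])) /=; last first.
  pose ttail (t : N.+1.-tuple T) := [tuple of behead t].
  exists ttail => [t _ | t /andP[_ /eqP <-]]; first exact: val_inj.
  by rewrite -tuple_eta.
apply: eq_bigl => t; rewrite theadE eqxx andbT /=. rewrite xA cx eqseq_cons eqxx /=.
have -> : forall u : seq T, all (mem (A :\ x)) u = (x \notin u) && all (mem A) u.
  elim => //= y u IH; rewrite IH !inE [y == x]eq_sym.
  by case: (x == y); case: (y \in A); case: (x \in u); case: (all _ u).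
by case: (x \in t); case: (all _ t); case: (uniq t).
Qed.

Section EE.
Variable n : nat.
Variable m : 'X_{1..n}.

Definition Qm (h : {set 'I_n}) : bool :=
  [forall i, ((i \in h) <= m i)%N && (m i <= (i \in h) + 1)%N].
Definition h2s (h : {set 'I_n}) : {set 'I_n} := [set i | (m i - (i \in h) == 1)%N].

Lemma pair_eq (h1 h2 : {set 'I_n}) :
  (mesym1 h1 + mesym1 h2 == m)%MM = Qm h1 && (h2 == h2s h1).
Proof.
apply/eqP/andP.
  move=> hm; split.
    by apply/forallP => i; rewrite -hm mnmDE !mnmE; case: (i \in h1); case: (i \in h2).
  apply/eqP/setP => i; rewrite inE -hm mnmDE !mnmE.
  by case: (i \in h1); case: (i \in h2).
case=> /forallP hQ /eqP ->; apply/mnmP => i; rewrite mnmDE !mnmE inE.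
move: (hQ i); case: (i \in h1); case: (m i) => [|[|[|x]]] //=.
Qed.

Lemma inner_sum (h1 : {set 'I_n}) s :
  (\sum_(h2 : {set 'I_n} | #|h2| == s) ((mesym1 h1 + mesym1 h2 == m)%MM : nat))%N
  = (Qm h1 && (#|h2s h1| == s)).
Proof.
rewrite (eq_bigr (fun h2 => (Qm h1 && (h2 == h2s h1)) : nat)); last by move=> h2 _; rewrite pair_eq.
rewrite big_mkcond /= (bigD1 (h2s h1)) //= big1 ?addn0.
  by rewrite eqxx andbT; case: (#|h2s h1| == s); case: (Qm h1).
by move=> h2 /negbTE ->; rewrite andbF; case: (_ == _).
Qed.

Lemma Qm_deg (h1 : {set 'I_n}) : Qm h1 -> mdeg m = (#|h1| + #|h2s h1|)%N.
Proof.
move=> hQ; have /eqP <- : (mesym1 h1 + mesym1 (h2s h1) == m)%MM by rewrite pair_eq hQ eqxx.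
by rewrite mdegD !mdeg_mesym1.
Qed.

Lemma coef_ee r s :
  mcoeff m (e n r * e n s) =
  ((r + s == mdeg m) * #|[set h : {set 'I_n} | (#|h| == r) && Qm h]|)%:R.
Proof.
rewrite /e !mesymE big_distrlr /= raddf_sum /=.
rewrite (eq_bigr (fun h1 => ((Qm h1 && (#|h2s h1| == s)) : nat)%:R)); last first.
  move=> h1 _; rewrite raddf_sum /= -(inner_sum h1 s) natr_sum; apply: eq_bigr => h2 _.
  by rewrite -mpolyXD mcoeffX.
rewrite -natr_sum; congr (_%:R).
rewrite -sum1dep_card big_distrr /= big_mkcond [in RHS]big_mkcond /=.
apply: eq_bigr => h1 _; case: eqP => hr //=; case hQ: (Qm h1) => //=.
by rewrite (Qm_deg h1 hQ) hr eqn_add2l muln1 eq_sym.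
Qed.

Definition Km : {set 'I_n} := [set i | m i == 2%N].
Definition Jm : {set 'I_n} := [set i | m i == 1%N].
Definition Bm : bool := [forall i, (m i <= 2)%N].

Lemma QmE h : Qm h = [&& Bm, Km \subset h & h \subset Km :|: Jm].
Proof.
apply/forallP/and3P.
  move=> hQ; split.
  - apply/forallP => i; move: (hQ i); case: (i \in h); case: (m i) => [|[|[|x]]] //.
  - apply/subsetP => i; rewrite inE => /eqP hi; move: (hQ i); rewrite hi; case: (i \in h) => //.
  - apply/subsetP => i hi; move: (hQ i); rewrite hi !inE; case: (m i) => [|[|[|x]]] //.
case=> /forallP hle /subsetP hK /subsetP hKJ i.
move: (hle i) (hK i) (hKJ i); rewrite !inE; case: (i \in h); case: (m i) => [|[|[|x]]] //=.
- by move=> _ _ /(_ isT).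
- by move=> _ /(_ isT).
Qed.

Lemma card_Q r : #|[set h : {set 'I_n} | (#|h| == r) && Qm h]| =
  ((Bm && (#|Km| <= r)%N) * 'C(#|Jm|, r - #|Km|))%N.
Proof.
have dKJ : [disjoint Km & Jm].
  by apply/pred0P => i; rewrite /= !inE; case: (m i) => [|[|[|x]]].
case hB: Bm; last first.
  rewrite /= mul0n; apply/eqP; rewrite cards_eq0; apply/eqP/setP => h.
  by rewrite !inE QmE hB andbF.
case: (leqP #|Km| r) => hk /=; last first.
  rewrite mul0n; apply/eqP; rewrite cards_eq0; apply/eqP/setP => h.
  rewrite !inE QmE hB /=; apply/negP => /and3P[/eqP hr hKh _].
  by move: (subset_leq_card hKh); rewrite hr leqNgt hk.
rewrite mul1n -cards_draws.
rewrite -[RHS](@card_in_imset _ _ (fun S => Km :|: S)); last first.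
  move=> S1 S2; rewrite !inE => /andP[hS1 _] /andP[hS2 _] hU.
  apply/setP => i; move/setP: hU => /(_ i); rewrite !in_setU.
  case hi: (i \in Km) => //=.
  have hS1' : i \notin S1 by apply/negP => /(subsetP hS1) hiJ; move: (pred0P dKJ i); rewrite /= hi hiJ.
  have hS2' : i \notin S2 by apply/negP => /(subsetP hS2) hiJ; move: (pred0P dKJ i); rewrite /= hi hiJ.
  by rewrite (negbTE hS1') (negbTE hS2').
congr #|pred_of_set _|; apply/setP => h; rewrite inE QmE hB /=.
apply/idP/imsetP.
  case/and3P => /eqP hr hKh hhKJ; exists (h :\: Km).
    rewrite inE; apply/andP; split.
      by apply/subsetP => i; rewrite !inE => /andP[hiK /(subsetP hhKJ)]; rewrite !inE (negbTE hiK).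
    by rewrite cardsD (setIidPr hKh) hr.
  by rewrite -{1}(setID h Km) (setIidPr hKh).
move=> [S]; rewrite inE => /andP[hSJ /eqP hS] ->.
rewrite subsetUl /= subUset subsetUl /= (subset_trans hSJ (subsetUr _ _)) andbT.
rewrite cardsU hS.
have -> : Km :&: S = set0.
  apply/setP => i; rewrite !inE; apply/negP => /andP[hiK /(subsetP hSJ) hiJ].
  by move: hiJ; rewrite inE (eqP hiK).
by rewrite cards0 subn0 subnKC.
Qed.
End EE.

Section TT.
Variable n : nat.
Variable m : 'X_{1..n}.
Variable N : nat.
Variable p : nat -> nat.

Definition mb (b : N.-tuple 'I_n) : 'X_{1..n} := (\sum_(j < N) U_(tnth b j) *+ p j)%MM.

Lemma mb_at (b : N.-tuple 'I_n) j0 : uniq b -> mb b (tnth b j0) = p j0.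
Proof.
move=> /tuple_uniqP ib; rewrite /mb mnm_sumE (bigD1 j0) //= mulmnE mnm1E eqxx mul1n.
rewrite big1 ?addn0 // => j hj; rewrite mulmnE mnm1E.
by case: eqP => [/ib /eqP|]; rewrite ?(negbTE hj).
Qed.

Lemma mb_out (b : N.-tuple 'I_n) i : i \notin b -> mb b i = 0%N.
Proof.
move=> hi; rewrite /mb mnm_sumE big1 // => j _; rewrite mulmnE mnm1E.
case: eqP => // hj; by move: hi; rewrite -hj mem_tnth.
Qed.

Lemma mdeg_mb (b : N.-tuple 'I_n) : mdeg (mb b) = (\sum_(j < N) p j)%N.
Proof. by rewrite /mb mdeg_sum; apply: eq_bigr => j _; rewrite mdegMn mdeg1 mul1n. Qed.

Lemma map_mkseqP (b : N.-tuple 'I_n) :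
  reflect (forall j : 'I_N, m (tnth b j) = p j) (map (fun i => m i) b == mkseq p N).
Proof.
apply: (iffP eqP).
  move=> h j; have := congr1 (fun s => nth 0%N s j) h.
  rewrite (nth_map (tnth b j)) ?size_tuple // nth_mkseq // => <-.
  by rewrite (tnth_nth (tnth b j)); congr (m _); apply: set_nth_default; rewrite size_tuple.
move=> h; apply: (@eq_from_nth _ 0%N); first by rewrite size_map size_tuple size_mkseq.
move=> i; rewrite size_map size_tuple => hi.
have := h (Ordinal hi); rewrite (tnth_nth (tnth b (Ordinal hi))) /= => hh.
by rewrite (nth_map (tnth b (Ordinal hi))) ?size_tuple // hh nth_mkseq.
Qed.

Lemma mb_eq (b : N.-tuple 'I_n) : uniq b ->
  (mb b == m) = (mdeg m == \sum_(j < N) p j)%N && (map (fun i => m i) b == mkseq p N).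
Proof.
move=> ub; apply/eqP/andP.
  move=> hm; split; first by rewrite -hm mdeg_mb.
  by apply/map_mkseqP => j; rewrite -hm mb_at.
case=> /eqP hdeg /map_mkseqP hmap.
have hin : forall j, mb b (tnth b j) = m (tnth b j) by move=> j; rewrite mb_at // hmap.
apply/mnmP => i; case: (boolP (i \in b)) => hi.
  by case/tnthP: hi => j ->; rewrite hin.
rewrite mb_out //.
have hle : forall k, (mb b k <= m k)%N.
  move=> k; case: (boolP (k \in b)) => hk; last by rewrite mb_out.
  by case/tnthP: hk => j ->; rewrite hin.
have := hdeg; rewrite -(mdeg_mb b) !mdegE (bigD1 i) //= [X in _ = X -> _](bigD1 i) //= mb_out //.
move=> h; apply/eqP; rewrite eq_sym -leqn0 -(leq_add2r (\sum_(i0 < n | i0 != i) m i0)) h add0n.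
by apply: leq_sum => k _; exact: hle k.
Qed.

Lemma coef_T :
  mcoeff m (\sum_(b : N.-tuple 'I_n | uniq b) \prod_(j < N) 'X_(tnth b j) ^+ p j : {mpoly rat[n]}) =
  ((mdeg m == \sum_(j < N) p j)%N *
    #|[set t : N.-tuple 'I_n | [&& all (mem setT) t, uniq t & map (fun i => m i) t == mkseq p N]]|)%:R.
Proof.
rewrite raddf_sum /=.
rewrite (eq_bigr (fun b => ((mb b == m) : nat)%:R)); last first.
  by move=> b _; rewrite mprodXnE mcoeffX.
rewrite -natr_sum; congr (_%:R).
rewrite -sum1dep_card big_distrr /= big_mkcond [in RHS]big_mkcond /=.
apply: eq_bigr => b _.
have -> : all (mem setT) b by apply/allP => x; rewrite inE.
case ub: (uniq b) => //=; rewrite mb_eq //.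
by case: (_ == _); case: (_ == _).
Qed.
End TT.

Lemma take_mkseq (f : nat -> nat) N j : (j <= N)%N -> take j (mkseq f N) = mkseq f j.
Proof. by move=> hj; rewrite /mkseq -map_take take_iota (minn_idPl hj). Qed.

Lemma count_mkseq (f : nat -> nat) v j :
  count_mem v (mkseq f j) = (\sum_(i < j) (f i == v))%N.
Proof.
elim: j => [|j IH]; first by rewrite big_ord0.
by rewrite mkseqS -cats1 count_cat IH big_ord_recr /= addn0.
Qed.

Definition blk (a b : nat) (j : nat) : nat :=
  if (j < a)%N then 2%N else if (j < a + b)%N then 1%N else 0%N.

Lemma sum_const_range (F : nat -> nat) lo hi v :
  (lo <= hi)%N -> (forall i, (lo <= i < hi)%N -> F i = v) ->
  (\sum_(lo <= i < hi) F i)%N = (v * (hi - lo))%N.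
Proof.
by move=> hlh hF; rewrite (eq_big_nat _ _ hF) sum_nat_const_nat mulnC.
Qed.

Lemma cnt_blk a b j :
  (\sum_(i < j) (blk a b i == blk a b j))%N =
  (if (j < a)%N then j else if (j < a + b)%N then j - a else j - (a + b))%N.
Proof.
rewrite -(big_mkord xpredT (fun i => (blk a b i == blk a b j) : nat)).
case: (ltnP j a) => hja.
  rewrite (@sum_const_range _ _ _ 1%N) ?mul1n ?subn0 //.
  by move=> i /andP[_ hi]; rewrite /blk hja (ltn_trans hi hja).
case: (ltnP j (a + b)) => hjb.
  rewrite (big_cat_nat _ (n := a)) //=.
  rewrite (@sum_const_range _ _ _ 0%N) ?mul0n ?add0n //; last first.
    by move=> i /andP[_ hi]; rewrite /blk hi ltnNge hja /= hjb.
  rewrite (@sum_const_range _ _ _ 1%N) ?mul1n //.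
  move=> i /andP[hai hi]; rewrite /blk (ltnNge j a) hja /= hjb (ltnNge i a) hai /=.
  by rewrite (ltn_trans hi hjb).
have hab : (a <= a + b)%N by apply: leq_addr.
rewrite (big_cat_nat _ (n := a)) //=; try lia.
rewrite (big_cat_nat _ (n := a + b) (m := a)) //=.
have hj0 : blk a b j = 0%N by rewrite /blk (ltnNge j a) hja /= (ltnNge j (a + b)) hjb.
rewrite hj0.
rewrite (@sum_const_range _ _ _ 0%N) ?mul0n ?add0n //; last first.
  by move=> i /andP[_ hi]; rewrite /blk hi.
rewrite (@sum_const_range _ _ _ 0%N) ?mul0n ?add0n //; last first.
  move=> i /andP[hai hi]; rewrite /blk hi (ltnNge i a) hai.
  by case: (i < a)%N.
rewrite (@sum_const_range _ _ _ 1%N) ?mul1n //.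
move=> i /andP[hai hi]; rewrite /blk (ltnNge i (a + b)) hai.
have -> : (i < a)%N = false by apply/negbTE; rewrite -leqNgt; apply: leq_trans hai; apply: leq_addr.
by [].
Qed.

Lemma prod_range (F : nat -> nat) lo len :
  (\prod_(lo <= j < lo + len) F j)%N = (\prod_(i < len) F (i + lo))%N.
Proof.
by rewrite -{1}[lo]add0n big_addn addKn big_mkord.
Qed.

Lemma prod_blk (cnt : nat -> nat) a b c N (q : nat -> nat) :
  N = (a + b + c)%N -> (forall j, (j < N)%N -> q j = blk a b j) ->
  (\prod_(j < N) (cnt (nth 0%N (mkseq q N) j) -
       count_mem (nth 0%N (mkseq q N) j) (take j (mkseq q N))))%N =
  (cnt 2%N ^_ a * cnt 1%N ^_ b * cnt 0%N ^_ c)%N.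
Proof.
move=> hN hq.
rewrite (eq_bigr (fun j : 'I_N => cnt (blk a b j) -
   (if (j < a)%N then (j : nat) else if (j < a + b)%N then j - a else j - (a + b)))%N); last first.
  move=> j _; rewrite nth_mkseq // (@take_mkseq q N j (ltnW (ltn_ord j))) count_mkseq hq //.
  rewrite -cnt_blk; congr (_ - _)%N; apply: eq_bigr => i _; rewrite hq //.
  by apply: ltn_trans (ltn_ord i) (ltn_ord j).
rewrite -(big_mkord xpredT (fun j => cnt (blk a b j) -
   (if (j < a)%N then (j : nat) else if (j < a + b)%N then j - a else j - (a + b)))%N).
rewrite hN (big_cat_nat _ (n := a + b)) //=; last by apply: leq_addr.
rewrite (big_cat_nat _ (n := a)) //=; last by apply: leq_addr.
rewrite !prod_range !ffact_prod.
congr (_ * _ * _)%N; apply: eq_bigr => i _.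
- by rewrite addn0 /blk ltn_ord.
- have h1 : (i + a < a)%N = false by rewrite ltnNge leq_addl.
  have h2 : (i + a < a + b)%N by rewrite addnC ltn_add2l ltn_ord.
  by rewrite /blk h1 h2 addnK.
- have h1 : (i + (a + b) < a)%N = false.
    by rewrite ltnNge (leq_trans (leq_addr b a) (leq_addl _ _)).
  have h2 : (i + (a + b) < a + b)%N = false by rewrite ltnNge leq_addl.
  by rewrite /blk h1 h2 addnK.
Qed.

Lemma coefZee n (m : 'X_{1..n}) (x : rat) r s :
  mcoeff m (x *: (e n r * e n s)) =
  x * ((r + s == mdeg m) * ((Bm n m && (#|Km n m| <= r)%N) * 'C(#|Jm n m|, r - #|Km n m|)))%:R.
Proof. by rewrite mcoeffZ coef_ee card_Q. Qed.

Lemma sum_blk a b c N (q : nat -> nat) :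
  N = (a + b + c)%N -> (forall j, (j < N)%N -> q j = blk a b j) ->
  (\sum_(j < N) q j)%N = (2 * a + b)%N.
Proof.
move=> hN hq; rewrite (eq_bigr (fun j : 'I_N => blk a b j)); last by move=> j _; rewrite hq.
rewrite -(big_mkord xpredT (blk a b)) hN.
rewrite (big_cat_nat _ (n := a + b)) //=; last by apply: leq_addr.
rewrite (big_cat_nat _ (n := a)) //=; last by apply: leq_addr.
rewrite (@sum_const_range _ 0 a 2%N) ?subn0; last 2 first.
- by [].
- by move=> i /andP[_ hi]; rewrite /blk hi.
rewrite (@sum_const_range _ a (a + b) 1%N) ?mul1n; last 2 first.
- by apply: leq_addr.
- move=> i /andP[hai hi]; rewrite /blk hi (ltnNge i a) hai.
  by [].
rewrite (@sum_const_range _ (a + b) (a + b + c) 0%N) ?mul0n; last 2 first.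
- by apply: leq_addr.
- move=> i /andP[hai hi]; rewrite /blk (ltnNge i (a + b)) hai.
  have -> : (i < a)%N = false by apply/negbTE; rewrite -leqNgt; apply: leq_trans hai; apply: leq_addr.
  by [].
lia.
Qed.

Lemma sum_id M2 M1 k j : (2 * k + j = 2 * M2 + M1)%N ->
  \sum_(i < M2.+1) (-1) ^+ i * c M1 i * ((k <= M2 - i)%N * 'C(j, M2 - i - k))%:R
  = (k == M2)%:R.
Proof.
move=> hkj.
case: (leqP k M2) => hk; last first.
  rewrite big1; first by rewrite (gtn_eqF hk).
  move=> i _; have -> : (k <= M2 - i)%N = false by apply/negbTE; rewrite -ltnNge; apply: leq_ltn_trans hk; apply: leq_subr.
  by rewrite mul0n mulr0.
set t := (M2 - k)%N.
have hj : j = (2 * t + M1)%N by rewrite /t; lia.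
have ht : (t.+1 <= M2.+1)%N by rewrite /t ltnS leq_subr.
transitivity (\sum_(i < t.+1) (-1) ^+ i * c M1 i * ('C(2 * t + M1, t - i))%:R).
  rewrite (big_ord_widen _ (fun i => (-1) ^+ i * c M1 i * ('C(2 * t + M1, t - i))%:R) ht).
  rewrite [in RHS]big_mkcond /=; apply: eq_bigr => i _.
  case: ifP => hi.
    have -> : (k <= M2 - i)%N by rewrite /t in hi; lia.
    by rewrite mul1n hj; congr (_ * ('C(_, _))%:R); rewrite /t; lia.
  move/negbT: hi; rewrite -leqNgt /t => hi.
  have hio := ltn_ord i.
  have -> : (k <= M2 - i)%N = false by apply/negbTE; rewrite -ltnNge; lia.
  by rewrite mul0n mulr0.
rewrite H_id; congr ((_ : bool)%:R); rewrite /t; apply/eqP/eqP; lia.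
Qed.

Lemma sum_full M2 M1 deg k j (B : bool) : (B -> deg = 2 * k + j)%N ->
  \sum_(i < M2.+1) (-1) ^+ i * c M1 i *
     ((((M2 - i) + (M2 + M1 + i))%N == deg) * ((B && (k <= M2 - i)%N) * 'C(j, M2 - i - k)))%:R
  = ((deg == 2 * M2 + M1)%N && B && (k == M2))%:R.
Proof.
move=> hB.
rewrite (eq_bigr (fun i : 'I_M2.+1 => (((deg == 2 * M2 + M1)%N && B) : nat)%:R *
   ((-1) ^+ i * c M1 i * ((k <= M2 - i)%N * 'C(j, M2 - i - k))%:R))); last first.
  move=> i _; have -> : ((M2 - i) + (M2 + M1 + i) = 2 * M2 + M1)%N.
    by have := ltn_ord i; lia.
  rewrite [(2 * M2 + M1 == deg)%N]eq_sym.
  by case: (deg == _); case: (B); rewrite /= ?mul0n ?mul1n ?mul0r ?mul1r ?mulr0.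
rewrite -mulr_sumr.
move: hB; case: B => hB; case hd: (deg == 2 * M2 + M1)%N; rewrite /= ?mul0r //.
rewrite mul1r sum_id //; move: (hB isT) (eqP hd); lia.
Qed.

Lemma card_sum n (P : pred 'I_n) : #|[set i | P i]| = (\sum_i (P i : nat))%N.
Proof. by rewrite -sum1dep_card big_mkcond; apply: eq_bigr => i _; case: (P i). Qed.

Lemma m_facts n (m : 'X_{1..n}) :
  (2 * #|Km n m| + #|Jm n m| + ~~ Bm n m <= mdeg m)%N /\
  (Bm n m -> mdeg m = (2 * #|Km n m| + #|Jm n m|)%N /\
             n = (#|[set i | m i == 0%N]| + #|Jm n m| + #|Km n m|)%N).
Proof.
have hK : #|Km n m| = (\sum_i (m i == 2%N : nat))%N by rewrite /Km card_sum.
have hJ : #|Jm n m| = (\sum_i (m i == 1%N : nat))%N by rewrite /Jm card_sum.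
have hZ : #|[set i | m i == 0%N]| = (\sum_i (m i == 0%N : nat))%N by rewrite card_sum.
have hG : #|[set i | (2 < m i)%N]| = (\sum_i ((2 < m i)%N : nat))%N by rewrite card_sum.
split.
  have h1 : (~~ Bm n m <= #|[set i | (2 < m i)%N]|)%N.
    case hB: (Bm n m) => //=; rewrite card_gt0; apply/set0Pn.
    move/negbT: hB; rewrite /Bm negb_forall => /existsP[i hi]; exists i; rewrite inE ltnNge.
    exact: hi.
  apply: leq_trans (_ : (2 * #|Km n m| + #|Jm n m| + #|[set i | (2 < m i)%N]| <= mdeg m)%N).
    by rewrite leq_add2l.
  rewrite hK hJ hG mdegE big_distrr /= -!big_split /=; apply: leq_sum => i _.
  by case: (m i) => [|[|[|x]]].
move=> hB; have hBi : forall i, (m i <= 2)%N by move=> i; apply: (forallP hB).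
split.
  rewrite hK hJ mdegE big_distrr /= -!big_split /=; apply: eq_bigr => i _.
  by move: (hBi i); case: (m i) => [|[|[|x]]].
rewrite hZ hJ hK -!big_split /= -[n in LHS]card_ord -sum1_card; apply: eq_bigr => i _.
by move: (hBi i); case: (m i) => [|[|[|x]]].
Qed.
Lemma final_arith (n m2 m1 k j z deg : nat) (B : bool) :
  (2 * k + j + ~~ B <= deg)%N -> (B -> deg = (2 * k + j)%N /\ n = (z + j + k)%N) ->
  ((deg == (2 * m2.+1 + m1)%N) * (k ^_ m2.+1 * j ^_ m1 * z ^_ 1))%:R -
  ((deg == (2 * m2 + (m1 + 2))%N) * (k ^_ m2 * j ^_ (m1 + 2) * z ^_ 0))%:R =
  ((m2.+1)`! * m1`!)%:R * (n%:R - m1%:R - m2.+1%:R) *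
  ((deg == (2 * m2.+1 + m1)%N) && B && (k == m2.+1))%:R -
  (m2`! * (m1 + 2)`!)%:R *
  ((deg == (2 * m2 + (m1 + 2))%N) && B && (k == m2))%:R :> rat.
Proof.
move=> hdeg hB.
have -> : (2 * m2 + (m1 + 2) = 2 * m2.+1 + m1)%N by lia.
case: (eqVneq deg (2 * m2.+1 + m1)) => hd; last first.
  by rewrite /= !mul0n !mulr0 subrr.
subst deg; rewrite /= !mul1n ffactn1 ffactn0 muln1.
case: B hdeg hB => /= hdeg hB; last first.
  have -> : (k ^_ m2.+1 * j ^_ m1 = 0)%N.
    case: (ltnP k m2.+1) => hk; first by rewrite ffact_small.
    by rewrite (@ffact_small j m1) ?muln0 //; lia.
  have -> : (k ^_ m2 * j ^_ (m1 + 2) = 0)%N.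
    case: (ltnP k m2) => hk; first by rewrite ffact_small.
    by rewrite (@ffact_small j (m1 + 2)) ?muln0 //; lia.
  by rewrite !mul0n !mulr0 subrr.
have [hd hn] := hB isT.
case: (eqVneq k m2.+1) => hk1.
  subst k; have hj : j = m1 by lia.
  subst j; rewrite (@ffact_small m1 (m1 + 2)) ?muln0; last by lia.
  have -> : (m2.+1 == m2) = false by rewrite gtn_eqF.
  rewrite !ffactnn hn !natrD !natrM /=; ring.
case: (eqVneq k m2) => hk2.
  subst k; have hj : j = (m1 + 2)%N by lia.
  subst j; rewrite (@ffact_small m2 m2.+1) //.
  rewrite !ffactnn !mul0n !mulr0 !mulr1 natrM; ring.
rewrite !mulr0 subr0.
case: (ltnP k m2) => hk.
  by rewrite !(@ffact_small k) ?mul0n ?subrr //; apply: ltn_trans hk _.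
have hk' : (m2.+1 < k)%N by lia.
by rewrite !(@ffact_small j) ?muln0 ?subrr //; lia.
Qed.
Theorem lemma3p5 (n m2 m1 : nat) (hn : (1 <= n)%N) (hm2 : (1 <= m2)%N) :
  Mpoly m2 m1 n =
    ((m2`! * m1`!)%:R * (n%:R - m1%:R - m2%:R) : rat) *:
      (\sum_(i < m2.+1) (((-1) ^+ i * c m1 i : rat) *: (e n (m2 - i) * e n (m2 + m1 + i))))
  - (((m2 - 1)`! * (m1 + 2)`!)%:R : rat) *:
      (\sum_(i < m2) (((-1) ^+ i * d m1 i : rat) *: (e n (m2 - 1 - i) * e n (m2 + m1 + 1 + i)))).
Proof.
case: m2 hm2 => // m2 _.
apply/mpolyP => m.
rewrite /Mpoly mcoeffB.
rewrite (@coef_T n m _ (fun j => if (j < m2.+1)%N then 2%N else if (j < m2.+1 + m1)%N then 1%N else 0%N)).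
rewrite (@coef_T n m _ (fun j => if (j < m2.+1 - 1)%N then 2%N else 1%N)).
rewrite mcoeffB !mcoeffZ !raddf_sum /=.
rewrite [in RHS](eq_bigr _ (fun i _ => coefZee _ _ _ _ _)).
rewrite [in RHS](eq_bigr _ (fun i _ => coefZee _ _ _ _ _)).
rewrite !card_pat ?size_mkseq //.
set cnt := fun v => #|[set x in [set: 'I_n] | m x == v]|.
have hq2 : forall j, (j < m1 + m2.+1 + 1)%N -> (if (j < m2.+1 - 1)%N then 2%N else 1%N) = blk m2 (m1 + 2) j.
  move=> j hj; rewrite /blk subn1 /=; case: ifP => // hj2.
  by have -> : (j < m2 + (m1 + 2))%N by lia.
rewrite (@prod_blk cnt m2.+1 m1 1 (m1 + m2.+1 + 1)); [| lia | by []].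
rewrite (@prod_blk cnt m2 (m1 + 2) 0 (m1 + m2.+1 + 1)); [| lia | exact: hq2].
rewrite (@sum_blk m2.+1 m1 1 (m1 + m2.+1 + 1) (fun j => if (j < m2.+1)%N then 2%N else if (j < m2.+1 + m1)%N then 1%N else 0%N)); [| lia | by []].
rewrite (@sum_blk m2 (m1 + 2) 0 (m1 + m2.+1 + 1) (fun j => if (j < m2.+1 - 1)%N then 2%N else 1%N)); [| lia | exact: hq2].
have [hdeg hB] := m_facts n m.
rewrite (@sum_full m2.+1 m1 (mdeg m) #|Km n m| #|Jm n m| (Bm n m)); last by case/hB.
rewrite (eq_bigr (fun i : 'I_m2.+1 => (-1) ^+ i * c (m1 + 2) i *
     ((((m2 - i) + (m2 + (m1 + 2) + i))%N == mdeg m) * ((Bm n m && (#|Km n m| <= m2 - i)%N) * 'C(#|Jm n m|, m2 - i - #|Km n m|)))%:R)); last first.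
  move=> i _; rewrite d_c subn1 /=.
  by have -> : (m2.+1 + m1 + 1 + i = m2 + (m1 + 2) + i)%N by lia.
rewrite (@sum_full m2 (m1 + 2) (mdeg m) #|Km n m| #|Jm n m| (Bm n m)); last by case/hB.
have e2 : cnt 2%N = #|Km n m| by rewrite /cnt /Km; congr #|pred_of_set _|; apply/setP => x; rewrite !inE.
have e1 : cnt 1%N = #|Jm n m| by rewrite /cnt /Jm; congr #|pred_of_set _|; apply/setP => x; rewrite !inE.
have e0 : cnt 0%N = #|[set i | m i == 0%N]| by rewrite /cnt; congr #|pred_of_set _|; apply/setP => x; rewrite !inE.
rewrite e2 e1 e0 subn1 /=.
exact: final_arith hdeg hB.
Qed.
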